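(* For $\rho>0$ let $\upsilon(\rho)=\sqrt{\frac{1+\sqrt{1+\rho^2}}{2}}$ and $E(\rho)=\frac12\left(\arccos\frac{1}{\upsilon(\rho)}-\frac{2(\upsilon(\rho)-1)}{\rho}\right)$. Then for all $\rho>0$, \[E(\rho)\geq \frac18\rho-\frac{5}{384}\rho^3,\] and moreover \[E(\rho)=\frac{\pi}{4}-\frac{\beta}{2}-\frac{\sin 2\beta}{4(1+\sin\beta)},\quad\text{where } \beta=\arcsin\frac{1}{\upsilon(\rho)}.\] *)

(* Defs.v *)
From Stdlib Require Import Reals.
Open Scope R_scope.

Definition upsilon (rho : R) : R := sqrt ((1 + sqrt (1 + rho ^ 2)) / 2).

Definition Efun (rho : R) : R :=
  / 2 * (acos (/ upsilon rho) - 2 * (upsilon rho - 1) / rho).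

(* Main.v *)
Require Import Defs.
From Stdlib Require Import Reals Lra Psatz.
Open Scope R_scope.
Lemma atan_lb : forall t, 0 <= t -> t - t^3/3 <= atan t.
Proof.
intros t Ht. destruct (Req_dec t 0) as [->|Hn].
{ rewrite atan_0; lra. }
set (f := fun x => atan x - (x - x^3/3)).
assert (D : forall c, derivable_pt_lim f c (/(1+c^2) - (1 - 3*c^2/3))).
{ intro c. unfold f. apply derivable_pt_lim_minus. apply derivable_pt_lim_atan.
  apply derivable_pt_lim_minus. apply derivable_pt_lim_id.
  replace (3*c^2/3) with (INR 3 * c^(pred 3) * /3).
  2:{ simpl. field. }
  apply (derivable_pt_lim_scal_right). apply derivable_pt_lim_pow. }
destruct (MVT_cor2 f _ 0 t ltac:(lra) (fun c _ => D c)) as [c [Hc Ic]].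
assert (f 0 = 0) by (unfold f; rewrite atan_0; lra).
assert (0 <= / (1 + c ^ 2) - (1 - 3 * c ^ 2 / 3)).
{ assert (0 < 1 + c^2) by nra.
  replace (/ (1 + c ^ 2) - (1 - 3 * c ^ 2 / 3)) with (c^4 / (1+c^2)) by (field; lra).
  unfold Rdiv; apply Rmult_le_pos; [nra| apply Rlt_le, Rinv_0_lt_compat; lra]. }
assert (0 <= f t) by nra. unfold f in H1. lra.
Qed.

Theorem lemma3p3 : forall rho : R, 0 < rho ->
  Efun rho >= / 8 * rho - 5 / 384 * rho ^ 3 /\
  (let beta := asin (/ upsilon rho) in
   Efun rho = PI / 4 - beta / 2 - sin (2 * beta) / (4 * (1 + sin beta))).
Proof.
intros rho Hr.
set (w := sqrt (1 + rho^2)).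
assert (Hw2 : w * w = 1 + rho^2) by (apply sqrt_sqrt; nra).
assert (Hw0 : 0 <= w) by apply sqrt_pos.
assert (Hw1 : 1 < w) by nra.
assert (Hu : upsilon rho = sqrt ((1 + w)/2)) by reflexivity.
set (u := upsilon rho) in *.
assert (Hu2 : u * u = (1+w)/2) by (rewrite Hu; apply sqrt_sqrt; lra).
assert (Hu0 : 0 <= u) by (rewrite Hu; apply sqrt_pos).
assert (Hu1 : 1 < u) by nra.
set (t := sqrt (1 - (/u)²) / /u).
assert (Hs : sqrt (1 - (/u)²) * sqrt (1 - (/u)²) = 1 - (/u)²).
{ apply sqrt_sqrt. unfold Rsqr. assert (0 < /u < 1).
  split. apply Rinv_0_lt_compat; lra. rewrite <- Rinv_1. apply Rinv_lt_contravar; lra.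
  nra. }
assert (Hs0 : 0 <= sqrt (1 - (/u)²)) by apply sqrt_pos.
assert (Ht : t = u * sqrt (1 - (/u)²)) by (unfold t; field; lra).
assert (Ht2 : t * t = u*u - 1).
{ rewrite Ht. replace (u * sqrt (1 - (/ u)²) * (u * sqrt (1 - (/ u)²))) with
   (u*u*(sqrt (1 - (/ u)²) * sqrt (1 - (/ u)²))) by ring. rewrite Hs. unfold Rsqr. field. lra. }
assert (Ht0 : 0 <= t) by (rewrite Ht; nra).
assert (Hrho : rho = 2 * u * t).
{ assert (rho * rho = (2*u*t)*(2*u*t)).
  { replace ((2*u*t)*(2*u*t)) with (4*(u*u)*(t*t)) by ring. rewrite Ht2, Hu2. nra. }
  apply Rsqr_inj; [lra | apply Rmult_le_pos; [lra|lra] | unfold Rsqr; lra]. }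
assert (Htp : 0 < t) by nra.
assert (Hac : acos (/u) = atan t).
{ unfold t. apply acos_atan. apply Rinv_0_lt_compat; lra. }
assert (Hiu : -1 <= /u <= 1).
{ assert (0 < /u < 1). split. apply Rinv_0_lt_compat; lra. rewrite <- Rinv_1. apply Rinv_lt_contravar; lra. lra. }
split.
- unfold Efun. fold u. rewrite Hac.
  pose proof (atan_lb t Ht0) as HA.
  assert (Key : /8*rho - 5/384*rho^3 <= /2 * ((t - t^3/3) - 2*(u-1)/rho)).
  { rewrite Hrho.
    set (v := u - 1).
    assert (Hv : 0 < v) by (unfold v; lra).
    replace u with (1+v) in * by (unfold v; ring).
    apply Rminus_le.
    replace (/ 8 * (2 * (1 + v) * t) - 5 / 384 * (2 * (1 + v) * t) ^ 3 -
       / 2 * (t - t ^ 3 / 3 - 2 * v / (2 * (1 + v) * t)))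
     with (- (v*(12*v^2+153*v^3+212*v^4+130*v^5+40*v^6+5*v^7)) / (48*(1+v)*t)).
    2:{ assert (T2 : t^2 = v^2+2*v) by nra.
      field_simplify; [|lra|lra]. replace (t^4) with ((v^2+2*v)^2) by (rewrite <- T2; ring).
      rewrite T2. field. lra. }
    unfold Rdiv.
    assert (0 <= v*(12*v^2+153*v^3+212*v^4+130*v^5+40*v^6+5*v^7)). { apply Rmult_le_pos; [lra|]. repeat apply Rplus_le_le_0_compat; try apply Rmult_le_pos; try lra; apply pow_le; lra. }
    assert (0 <= / (48 * (1 + v) * t)) by (apply Rlt_le, Rinv_0_lt_compat; apply Rmult_lt_0_compat; lra).
    nra. }
  lra.
- intro beta. unfold Efun. fold u.
  rewrite (acos_asin _ Hiu). fold beta.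
  assert (Sb : sin beta = / u) by (apply sin_asin; exact Hiu).
  assert (Cb : cos beta = t / u).
  { unfold beta. rewrite (cos_asin _ Hiu). rewrite Ht. field. lra. }
  rewrite sin_2a, Sb, Cb, Hrho.
  field_simplify; [|lra|lra].
  assert (E1: forall a b c d, b<>0 -> d<>0 -> a*d = c*b -> a/b = c/d).
  { intros a b c d Hb Hd Hab. field_simplify_eq; auto. lra. }
  apply E1; try (apply Rgt_not_eq || idtac); try nra.
Qed.
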